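(* For every positive integer $R$, $$\frac{1}{\#\{\mathbf{x}\in\mathbb{Z}^2:\|\mathbf{x}\|_E\le R\}}\sum_{\substack{\mathbf{x}\in\mathbb{Z}^2\\ \|\mathbf{x}\|_E\le R}}\operatorname{length}(o(\mathbf{x}))=\frac{8}{3\pi}\big(\sqrt2+2\sqrt5\big)R+O(1).$$ The implied constant is absolute.
   Context: Define $\mathcal K_1,\mathcal K_2:\mathbb{Z}^2\to\mathbb{Z}^2$ by $\mathcal K_1(x_1,x_2)=(-x_1+x_2,x_2)$ and $\mathcal K_2(x_1,x_2)=(x_1,x_1-x_2)$. The orbit $o(\mathbf{x})$ of $\mathbf{x}=(x_1,x_2)$ under repeated application of $\mathcal K_1,\mathcal K_2$ is traversed as the closed path $P_1\to P_2\to\cdots\to P_6\to P_1$, where $P_1=(x_1,x_2)$, $P_2=(-x_1+x_2,x_2)$, $P_3=(-x_1+x_2,-x_1)$, $P_4=(-x_2,-x_1)$, $P_5=(-x_2,x_1-x_2)$, $P_6=(x_1,x_1-x_2)$. Consecutive points differ by an application of $\mathcal K_1$ or $\mathcal K_2$. The length (perimeter) of the orbit is the total Euclidean length of this closed path: $$\operatorname{length}(o(\mathbf{x}))=2\big(|2x_1-x_2|+|x_1+x_2|+|2x_2-x_1|\big).$$ This quantity depends only on the orbit. $\|\cdot\|_E$ is the Euclidean norm. *)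

(* Defs.v *)
From Stdlib Require Import Reals ZArith List.
Import ListNotations.
Open Scope R_scope.

Definition K1 (x : Z * Z) : Z * Z := ((- fst x + snd x)%Z, snd x).
Definition K2 (x : Z * Z) : Z * Z := (fst x, (fst x - snd x)%Z).

Definition distE (p q : Z * Z) : R :=
  sqrt ((IZR (fst p) - IZR (fst q)) ^ 2 + (IZR (snd p) - IZR (snd q)) ^ 2).

(* The closed path P1 -> P2 -> ... -> P6 -> P1 traversing the orbit of x. *)
Definition orbit_path (x : Z * Z) : list (Z * Z) :=
  let x1 := fst x in let x2 := snd x in
  [ (x1, x2);
    ((- x1 + x2)%Z, x2);
    ((- x1 + x2)%Z, (- x1)%Z);
    ((- x2)%Z, (- x1)%Z);
    ((- x2)%Z, (x1 - x2)%Z);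
    (x1, (x1 - x2)%Z) ].

Fixpoint open_length (p : Z * Z) (l : list (Z * Z)) : R :=
  match l with
  | [] => 0
  | q :: l' => distE p q + open_length q l'
  end.

Definition closed_length (l : list (Z * Z)) : R :=
  match l with
  | [] => 0
  | p :: l' => open_length p (l' ++ [p])
  end.

Definition orbit_length (x : Z * Z) : R := closed_length (orbit_path x).

Definition coord_range (n : nat) : list Z :=
  map (fun i => (Z.of_nat i - Z.of_nat n)%Z) (seq 0 (2 * n + 1)).

Definition disk_points (n : nat) : list (Z * Z) :=
  filter (fun x => Z.leb (fst x * fst x + snd x * snd x) (Z.of_nat n * Z.of_nat n))
         (list_prod (coord_range n) (coord_range n)).

Definition sum_list (l : list R) : R := fold_right Rplus 0 l.

Definition avg_orbit_length (n : nat) : R :=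
  sum_list (map orbit_length (disk_points n)) / INR (length (disk_points n)).

(* Main.v *)
Require Import Defs.
From Coquelicot Require Import Coquelicot.
From Stdlib Require Import Reals ZArith List Lra Lia Psatz.
Import ListNotations.
Open Scope R_scope.

Fixpoint zsum (f : Z -> R) (a : Z) (len : nat) : R :=
  match len with O => 0 | S l => f a + zsum f (a + 1)%Z l end.

Lemma zsum_ext f g a len :
  (forall i, (a <= i < a + Z.of_nat len)%Z -> f i = g i) -> zsum f a len = zsum g a len.
Proof.
  revert a; induction len as [|l IH]; intros a H; simpl; auto.
  rewrite (H a) by lia. rewrite (IH (a+1)%Z); auto. intros i Hi; apply H; lia.
Qed.

Lemma zsum_plus f g a len : zsum (fun i => f i + g i) a len = zsum f a len + zsum g a len.
Proof. revert a; induction len; intros a; simpl; [lra|rewrite IHlen; lra]. Qed.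

Lemma zsum_scal c f a len : zsum (fun i => c * f i) a len = c * zsum f a len.
Proof. revert a; induction len; intros a; simpl; [lra|rewrite IHlen; lra]. Qed.

Lemma zsum_const c a len : zsum (fun _ => c) a len = INR len * c.
Proof. revert a; induction len; intros a; simpl zsum; [simpl; lra|rewrite IHlen, S_INR; lra]. Qed.

Lemma zsum_app f a l1 l2 : zsum f a (l1 + l2) = zsum f a l1 + zsum f (a + Z.of_nat l1)%Z l2.
Proof.
  revert a; induction l1; intros a; simpl.
  - rewrite Z.add_0_r; lra.
  - rewrite IHl1. replace (a + 1 + Z.of_nat l1)%Z with (a + Z.pos (Pos.of_succ_nat l1))%Z by lia. lra.
Qed.

Lemma zsum_S_r f a l : zsum f a (S l) = zsum f a l + f (a + Z.of_nat l)%Z.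
Proof.
  replace (S l) with (l + 1)%nat by lia. rewrite zsum_app. simpl. lra.
Qed.

Lemma zsum_le f g a len :
  (forall i, (a <= i < a + Z.of_nat len)%Z -> f i <= g i) -> zsum f a len <= zsum g a len.
Proof.
  revert a; induction len as [|l IH]; intros a H; simpl; [lra|].
  assert (f a <= g a) by (apply H; lia).
  assert (zsum f (a+1)%Z l <= zsum g (a+1)%Z l) by (apply IH; intros i Hi; apply H; lia). lra.
Qed.

Lemma zsum_abs_le f g a len B :
  (forall i, (a <= i < a + Z.of_nat len)%Z -> Rabs (f i - g i) <= B) ->
  Rabs (zsum f a len - zsum g a len) <= INR len * B.
Proof.
  revert a; induction len as [|l IH]; intros a H; simpl zsum.
  - simpl. rewrite Rminus_0_r, Rabs_R0; lra.
  - rewrite S_INR.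
    assert (H1 : Rabs (f a - g a) <= B) by (apply H; lia).
    assert (H2 : Rabs (zsum f (a+1)%Z l - zsum g (a+1)%Z l) <= INR l * B)
      by (apply IH; intros i Hi; apply H; lia).
    replace (f a + zsum f (a + 1)%Z l - (g a + zsum g (a + 1)%Z l)) with
      ((f a - g a) + (zsum f (a + 1)%Z l - zsum g (a + 1)%Z l)) by ring.
    eapply Rle_trans; [apply Rabs_triang|]. lra.
Qed.

Lemma zsum_telescope (F : Z -> R) a len :
  zsum (fun i => F (i + 1)%Z - F i) a len = F (a + Z.of_nat len)%Z - F a.
Proof.
  revert a; induction len; intros a; simpl.
  - rewrite Z.add_0_r; lra.
  - rewrite IHlen. replace (a + 1 + Z.of_nat len)%Z with (a + Z.pos (Pos.of_succ_nat len))%Z by lia. lra.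
Qed.

Lemma zsum_swap (F : Z -> Z -> R) a l b m :
  zsum (fun i => zsum (fun j => F i j) b m) a l = zsum (fun j => zsum (fun i => F i j) a l) b m.
Proof.
  revert a; induction l; intros a; simpl.
  - rewrite zsum_const; simpl; lra.
  - rewrite IHl. rewrite <- zsum_plus. reflexivity.
Qed.

Lemma zsum_neg f n : zsum f (- Z.of_nat n)%Z n = zsum (fun k => f (- k)%Z) 1%Z n.
Proof.
  induction n.
  - reflexivity.
  - change (zsum f (- Z.of_nat (S n))%Z (S n)) with
      (f (- Z.of_nat (S n))%Z + zsum f (- Z.of_nat (S n) + 1)%Z n).
    replace (- Z.of_nat (S n) + 1)%Z with (- Z.of_nat n)%Z by lia.
    rewrite IHn, zsum_S_r.
    replace (- (1 + Z.of_nat n))%Z with (- Z.of_nat (S n))%Z by lia. lra.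
Qed.

Lemma zsum_sym f n :
  zsum f (- Z.of_nat n)%Z (2 * n + 1) = zsum (fun k => f (- k)%Z) 1%Z n + zsum f 0%Z (n + 1).
Proof.
  replace (2 * n + 1)%nat with (n + (n + 1))%nat by lia.
  rewrite zsum_app, zsum_neg. f_equal. f_equal. lia.
Qed.

Lemma zsum_shift1 f l : zsum f 0%Z (S l) = f 0%Z + zsum f 1%Z l.
Proof. reflexivity. Qed.

Lemma sum_list_app l1 l2 : sum_list (l1 ++ l2) = sum_list l1 + sum_list l2.
Proof. induction l1; simpl; [lra| rewrite IHl1; lra]. Qed.

Lemma sum_filter {A} (p : A -> bool) (f : A -> R) l :
  sum_list (map f (filter p l)) = sum_list (map (fun x => if p x then f x else 0) l).
Proof. induction l; simpl; auto. destruct (p a); simpl; rewrite IHl; lra. Qed.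

Lemma sum_prod {A B} (f : A * B -> R) L1 L2 :
  sum_list (map f (list_prod L1 L2)) =
  sum_list (map (fun a => sum_list (map (fun b => f (a, b)) L2)) L1).
Proof.
  induction L1; simpl; auto.
  rewrite map_app, sum_list_app, IHL1, map_map. reflexivity.
Qed.

Lemma sum_length {A} (l : list A) : INR (length l) = sum_list (map (fun _ => 1) l).
Proof. induction l; simpl length; [simpl; lra|rewrite S_INR; simpl; rewrite IHl; lra]. Qed.

Lemma sum_coord_gen g n s len :
  sum_list (map g (map (fun i => (Z.of_nat i - Z.of_nat n)%Z) (seq s len))) =
  zsum g (Z.of_nat s - Z.of_nat n)%Z len.
Proof.
  revert s; induction len; intros s; simpl; auto.
  rewrite IHlen. f_equal. f_equal. lia.
Qed.

Lemma sum_coord g n : sum_list (map g (coord_range n)) = zsum g (- Z.of_nat n)%Z (2 * n + 1).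
Proof. unfold coord_range. rewrite sum_coord_gen. f_equal. Qed.

Definition Dsum (n : nat) (F : Z -> Z -> R) : R :=
  zsum (fun a => zsum (fun b =>
     if Z.leb (a * a + b * b) (Z.of_nat n * Z.of_nat n) then F a b else 0)
   (- Z.of_nat n)%Z (2 * n + 1)) (- Z.of_nat n)%Z (2 * n + 1).

Lemma disk_sum f n : sum_list (map f (disk_points n)) = Dsum n (fun a b => f (a, b)).
Proof.
  unfold disk_points, Dsum. rewrite sum_filter, sum_prod, sum_coord.
  apply zsum_ext; intros i _. rewrite sum_coord. reflexivity.
Qed.

Lemma Dsum_plus n F G : Dsum n (fun a b => F a b + G a b) = Dsum n F + Dsum n G.
Proof.
  unfold Dsum. rewrite <- zsum_plus. apply zsum_ext; intros i _.
  rewrite <- zsum_plus. apply zsum_ext; intros j _. destruct Z.leb; lra.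
Qed.

Lemma Dsum_scal n c F : Dsum n (fun a b => c * F a b) = c * Dsum n F.
Proof.
  unfold Dsum. rewrite <- zsum_scal. apply zsum_ext; intros i _.
  rewrite <- zsum_scal. apply zsum_ext; intros j _. destruct Z.leb; lra.
Qed.

Lemma Dsum_ext n F G : (forall a b, F a b = G a b) -> Dsum n F = Dsum n G.
Proof.
  intros H; unfold Dsum. apply zsum_ext; intros i _. apply zsum_ext; intros j _. rewrite H; auto.
Qed.

Lemma Dsum_swap n F : Dsum n F = Dsum n (fun a b => F b a).
Proof.
  unfold Dsum. rewrite zsum_swap. apply zsum_ext; intros i _. apply zsum_ext; intros j _.
  rewrite (Z.add_comm (j*j)). reflexivity.
Qed.

Lemma dist_h x1 x2 y : distE (x1, y) (x2, y) = Rabs (IZR x1 - IZR x2).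
Proof.
  unfold distE; cbn [fst snd]. replace ((IZR y - IZR y) ^ 2) with 0 by ring.
  rewrite Rplus_0_r, <- sqrt_Rsqr_abs. unfold Rsqr. f_equal. ring.
Qed.

Lemma dist_v x y1 y2 : distE (x, y1) (x, y2) = Rabs (IZR y1 - IZR y2).
Proof.
  unfold distE; cbn [fst snd]. replace ((IZR x - IZR x) ^ 2) with 0 by ring.
  rewrite Rplus_0_l, <- sqrt_Rsqr_abs. unfold Rsqr. f_equal. ring.
Qed.

Lemma Rabs_eq_opp u v : u = - v -> Rabs u = Rabs v.
Proof. intros ->. apply Rabs_Ropp. Qed.

Lemma orbit_formula a b :
  orbit_length (a, b) =
  2 * (Rabs (2 * IZR a - IZR b) + Rabs (IZR a + IZR b) + Rabs (IZR a - 2 * IZR b)).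
Proof.
  unfold orbit_length, orbit_path, closed_length. simpl fst; simpl snd.
  simpl app. unfold open_length.
  rewrite !dist_h, !dist_v.
  rewrite ?plus_IZR, ?opp_IZR, ?minus_IZR.
  assert (E1 : Rabs (IZR a - (- IZR a + IZR b)) = Rabs (2 * IZR a - IZR b)) by (f_equal; ring).
  assert (E2 : Rabs (IZR b - - IZR a) = Rabs (IZR a + IZR b)) by (f_equal; ring).
  assert (E3 : Rabs (- IZR a + IZR b - - IZR b) = Rabs (IZR a - 2 * IZR b))
    by (apply Rabs_eq_opp; ring).
  assert (E4 : Rabs (- IZR a - (IZR a - IZR b)) = Rabs (2 * IZR a - IZR b))
    by (apply Rabs_eq_opp; ring).
  assert (E5 : Rabs (- IZR b - IZR a) = Rabs (IZR a + IZR b)) by (apply Rabs_eq_opp; ring).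
  assert (E6 : Rabs (IZR a - IZR b - IZR b) = Rabs (IZR a - 2 * IZR b)) by (f_equal; ring).
  rewrite E1, E2, E3, E4, E5, E6. ring.
Qed.

Lemma zsum_zero f a len : (forall i, (a <= i < a + Z.of_nat len)%Z -> f i = 0) -> zsum f a len = 0.
Proof.
  intros H. rewrite (zsum_ext f (fun _ => 0)) by auto. rewrite zsum_const. lra.
Qed.

Lemma column (phi : Z -> R) n k :
  (- Z.of_nat n <= k <= Z.of_nat n)%Z ->
  zsum (fun s => if Z.leb (k * k + s * s) (Z.of_nat n * Z.of_nat n) then phi s else 0)
       (- Z.of_nat n)%Z (2 * n + 1)
  = zsum phi (- Z.sqrt (Z.of_nat n * Z.of_nat n - k * k))%Z
         (2 * Z.to_nat (Z.sqrt (Z.of_nat n * Z.of_nat n - k * k)) + 1).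
Proof.
  intros Hk.
  set (m := (Z.of_nat n * Z.of_nat n - k * k)%Z).
  assert (Hm : (0 <= m)%Z) by (unfold m; nia).
  pose proof (Z.sqrt_spec m Hm) as Hs. simpl in Hs.
  set (h := Z.sqrt m) in *.
  assert (Hh0 : (0 <= h)%Z) by (apply Z.sqrt_nonneg).
  assert (Hhn : (h <= Z.of_nat n)%Z) by nia.
  set (hn := Z.to_nat h).
  assert (Hhn' : Z.of_nat hn = h) by (unfold hn; lia).
  assert (Hle : (hn <= n)%nat) by lia.
  replace (2 * n + 1)%nat with ((n - hn) + ((2 * hn + 1) + (n - hn)))%nat by lia.
  rewrite zsum_app, zsum_app.
  rewrite zsum_zero.
  2:{ intros i Hi. destruct (Z.leb_spec (k * k + i * i) (Z.of_nat n * Z.of_nat n)); auto.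
      exfalso. unfold m in Hs. nia. }
  rewrite (zsum_zero _ (- Z.of_nat n + Z.of_nat (n - hn) + Z.of_nat (2 * hn + 1))%Z).
  2:{ intros i Hi. destruct (Z.leb_spec (k * k + i * i) (Z.of_nat n * Z.of_nat n)); auto.
      exfalso. unfold m in Hs. nia. }
  replace (- Z.of_nat n + Z.of_nat (n - hn))%Z with (- h)%Z by lia.
  rewrite Rplus_0_l, Rplus_0_r.
  apply zsum_ext. intros i Hi.
  destruct (Z.leb_spec (k * k + i * i) (Z.of_nat n * Z.of_nat n)); auto.
  exfalso. unfold m in Hs. nia.
Qed.

Definition Good (F g : R -> R) (p q : R) : Prop :=
  g q * (q - p) <= F q - F p <= g p * (q - p).

Lemma good_mvt F g p q :
  p <= q ->
  (forall x, p < x < q -> is_derive F x (g x)) ->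
  (forall x, p <= x <= q -> continuity_pt F x) ->
  (forall x y, p <= x -> x <= y -> y <= q -> g y <= g x) ->
  Good F g p q.
Proof.
  intros Hpq Hd Hc Hm.
  destruct (Req_dec p q) as [<-|Hne].
  { unfold Good. replace (p - p) with 0 by ring. lra. }
  destruct (MVT_gen F p q g) as [c [Hc1 Hc2]].
  - rewrite Rmin_left, Rmax_right by lra. exact Hd.
  - rewrite Rmin_left, Rmax_right by lra. exact Hc.
  - rewrite Rmin_left, Rmax_right in Hc1 by lra.
    unfold Good. rewrite Hc2.
    assert (g q <= g c) by (apply Hm; lra).
    assert (g c <= g p) by (apply Hm; lra).
    split; apply Rmult_le_compat_r; lra.
Qed.

Lemma good_glue F g p c q :
  p <= c <= q -> Good F g p c -> Good F g c q -> g q <= g c -> g c <= g p -> Good F g p q.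
Proof.
  unfold Good. intros Hc H1 H2 H3 H4.
  assert (g q * (c - p) <= g c * (c - p)) by (apply Rmult_le_compat_r; lra).
  assert (g c * (q - c) <= g p * (q - c)) by (apply Rmult_le_compat_r; lra).
  nra.
Qed.

Lemma good_ext F1 F2 g p q : F1 p = F2 p -> F1 q = F2 q -> Good F1 g p q -> Good F2 g p q.
Proof. unfold Good; intros -> ->; auto. Qed.

Lemma good_sum F g n :
  (forall k, (k < n)%nat -> Good F g (INR k) (INR k + 1)) ->
  zsum (fun i => g (IZR i)) 1%Z n <= F (INR n) - F 0 <= zsum (fun i => g (IZR i)) 0%Z n.
Proof.
  induction n as [|n IH]; intros H.
  - simpl. lra.
  - assert (IH' := IH (fun k Hk => H k ltac:(lia))).
    assert (Hn := H n ltac:(lia)). unfold Good in Hn.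
    rewrite !zsum_S_r.
    replace (IZR (1 + Z.of_nat n)) with (INR n + 1) by (rewrite plus_IZR, <- INR_IZR_INZ; lra).
    replace (IZR (0 + Z.of_nat n)) with (INR n) by (rewrite Z.add_0_l, <- INR_IZR_INZ; reflexivity).
    rewrite S_INR. replace (INR n + 1 - INR n) with 1 in Hn by ring. lra.
Qed.

Lemma good_sum2 F g n :
  (forall k, (k < n)%nat -> Good F g (INR k) (INR k + 1)) -> 0 <= g (INR n) ->
  F (INR n) - F 0 <= zsum (fun i => g (IZR i)) 0%Z (n + 1) <= F (INR n) - F 0 + g 0.
Proof.
  intros H Hg. destruct (good_sum F g n H) as [H1 H2].
  split.
  - rewrite Nat.add_1_r, zsum_S_r.
    replace (IZR (0 + Z.of_nat n)) with (INR n) by (rewrite Z.add_0_l, <- INR_IZR_INZ; reflexivity). lra.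
  - rewrite Nat.add_1_r, zsum_shift1. lra.
Qed.

Lemma div_eq a b c : b <> 0 -> a = c * b -> a / b = c.
Proof. intros Hb ->. field. auto. Qed.

Definition wf (N t : R) := sqrt (N * N - t * t).

Lemma cont_w N x : continuous (wf N) x.
Proof.
  unfold wf. apply continuous_sqrt_comp.
  apply (@ex_derive_continuous R_AbsRing R_NormedModule). auto_derive. auto.
Qed.

Lemma w_dec N x y : 0 <= x -> x <= y -> wf N y <= wf N x.
Proof. intros. unfold wf. apply sqrt_le_1_alt. nra. Qed.

Lemma w_nonneg N x : 0 <= wf N x.
Proof. apply sqrt_pos. Qed.

Lemma w_pos N x : 0 < N -> -N < x < N -> 0 < wf N x.
Proof. intros. apply sqrt_lt_R0. nra. Qed.

Lemma w_sq N x : -N <= x <= N -> wf N x * wf N x = N * N - x * x.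
Proof. intros. apply sqrt_sqrt. nra. Qed.

Lemma w_0 N : 0 <= N -> wf N 0 = N.
Proof. intros. unfold wf. rewrite Rmult_0_r, Rminus_0_r. apply sqrt_square; auto. Qed.

Lemma w_N N : wf N N = 0.
Proof. unfold wf. rewrite Rminus_diag. apply sqrt_0. Qed.

Lemma w_even N x : wf N (- x) = wf N x.
Proof. unfold wf. f_equal. ring. Qed.

Section Count.
Variable N : R.
Hypothesis HN : 0 < N.

Definition A1 t := (t * wf N t + N * N * atan (t / wf N t)) / 2.
Definition A2 t := (t * wf N t + N * N * (PI / 2 - atan (wf N t / t))) / 2.
Definition Af t := if Rle_dec t (N / 2) then A1 t else A2 t.

Lemma A1_der x : -N < x < N -> is_derive A1 x (wf N x).
Proof.
  intros Hx. unfold A1, wf. auto_derive.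
  - assert (0 < N * N - x * x) by nra. repeat split; try lra.
    apply Rgt_not_eq, sqrt_lt_R0. lra.
  - assert (Hp : 0 < N * N - x * x) by nra.
    replace (N * N + - (x * x)) with (N * N - x * x) by ring.
    pose proof (sqrt_lt_R0 _ Hp) as Hs.
    pose proof (sqrt_sqrt _ (Rlt_le _ _ Hp)) as Hss.
    set (s := sqrt (N * N - x * x)) in *.
    field_simplify.
    all: try nra.
    apply div_eq; [nra|]. nra.
Qed.

Lemma A2_der x : 0 < x < N -> is_derive A2 x (wf N x).
Proof.
  intros Hx. unfold A2, wf. auto_derive.
  - assert (0 < N * N - x * x) by nra. repeat split; try lra.
  - assert (Hp : 0 < N * N - x * x) by nra.
    replace (N * N + - (x * x)) with (N * N - x * x) by ring.
    pose proof (sqrt_lt_R0 _ Hp) as Hs.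
    pose proof (sqrt_sqrt _ (Rlt_le _ _ Hp)) as Hss.
    set (s := sqrt (N * N - x * x)) in *.
    field_simplify.
    all: try nra.
    apply div_eq; [nra|]. nra.
Qed.

Lemma A1_cont x : -N < x < N -> continuity_pt A1 x.
Proof.
  intros Hx. apply continuity_pt_filterlim.
  apply (@ex_derive_continuous R_AbsRing R_NormedModule).
  eexists. apply A1_der; auto.
Qed.

Lemma A2_cont x : 0 < x -> continuity_pt A2 x.
Proof.
  intros Hx. apply continuity_pt_filterlim. unfold A2, Rdiv.
  apply (continuous_mult (fun t => t * wf N t + N * N * (PI / 2 - atan (wf N t * / t))) (fun _ => /2)).
  2: apply continuous_const.
  apply (continuous_plus (fun t => t * wf N t) (fun t => N * N * (PI / 2 - atan (wf N t * / t)))).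
  - apply (continuous_mult (fun t => t) (wf N)). apply continuous_id. apply cont_w.
  - apply (continuous_mult (fun _ => N * N) (fun t => PI / 2 - atan (wf N t * / t))).
    apply continuous_const.
    apply (continuous_plus (fun _ => PI/2) (fun t => - atan (wf N t * / t))).
    apply continuous_const.
    apply (continuous_opp (fun t => atan (wf N t * / t))).
    apply continuous_atan_comp.
    apply (continuous_mult (wf N) (fun t => / t)). apply cont_w.
    apply continuous_Rinv. lra.
Qed.

Lemma A12 : A1 (N / 2) = A2 (N / 2).
Proof.
  unfold A1, A2. f_equal. f_equal. f_equal.
  assert (Hw : 0 < wf N (N / 2)) by (apply w_pos; lra).
  rewrite <- atan_inv.
  - f_equal. field. lra.
  - apply Rdiv_lt_0_compat; lra.
Qed.

Lemma Af_eq1 t : t <= N / 2 -> Af t = A1 t.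
Proof. intros. unfold Af. destruct Rle_dec; auto; lra. Qed.

Lemma Af_eq2 t : N / 2 <= t -> Af t = A2 t.
Proof.
  intros. unfold Af. destruct Rle_dec; auto.
  assert (t = N / 2) by lra. subst. apply A12.
Qed.

Lemma Af_0 : Af 0 = 0.
Proof.
  rewrite Af_eq1 by lra. unfold A1. unfold Rdiv; rewrite ?Rmult_0_l, ?Rmult_0_r, atan_0; lra.
Qed.

Lemma Af_N : Af N = N * N * PI / 4.
Proof.
  rewrite Af_eq2 by lra. unfold A2. rewrite w_N. unfold Rdiv; rewrite ?Rmult_0_l, ?Rmult_0_r, atan_0; lra.
Qed.

Lemma good_Af p q : 0 <= p -> p <= q -> q <= N -> Good Af (wf N) p q.
Proof.
  intros H0 Hpq HqN.
  assert (G1 : forall p q, 0 <= p -> p <= q -> q <= N / 2 -> Good Af (wf N) p q).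
  { intros a b Ha Hab Hb. apply (good_ext A1).
    - rewrite Af_eq1; auto; lra.
    - rewrite Af_eq1; auto.
    - apply good_mvt; auto.
      + intros x Hx. apply A1_der. lra.
      + intros x Hx. apply A1_cont. lra.
      + intros x y Hx Hxy Hy. apply w_dec; lra. }
  assert (G2 : forall p q, N / 2 <= p -> p <= q -> q <= N -> Good Af (wf N) p q).
  { intros a b Ha Hab Hb. apply (good_ext A2).
    - rewrite Af_eq2; auto.
    - rewrite Af_eq2; auto; lra.
    - apply good_mvt; auto.
      + intros x Hx. apply A2_der. lra.
      + intros x Hx. apply A2_cont. lra.
      + intros x y Hx Hxy Hy. apply w_dec; lra. }
  destruct (Rle_dec q (N / 2)); [apply G1; auto|].
  destruct (Rle_dec (N / 2) p); [apply G2; auto|].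
  apply (good_glue _ _ p (N / 2) q); try lra.
  - apply G1; lra.
  - apply G2; lra.
  - apply w_dec; lra.
  - apply w_dec; lra.
Qed.
End Count.

Lemma count_sum (n : nat) : (1 <= n)%nat ->
  INR n * INR n * PI / 4 <= zsum (fun i => wf (INR n) (IZR i)) 0%Z (n + 1)
    <= INR n * INR n * PI / 4 + INR n.
Proof.
  intros Hn.
  assert (HN : 0 < INR n) by (apply lt_0_INR; lia).
  assert (H := good_sum2 (Af (INR n)) (wf (INR n)) n).
  rewrite Af_N, Af_0, w_0 in H by lra.
  replace (INR n * INR n * PI / 4 - 0) with (INR n * INR n * PI / 4) in H by ring.
  apply H.
  - intros k Hk. apply good_Af; auto.
    + apply pos_INR.
    + lra.
    + rewrite <- S_INR. apply le_INR. lia.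
  - apply w_nonneg.
Qed.

Definition Phd (u w : R) := ((u + w) * Rabs (u + w) - (u - w) * Rabs (u - w)) / 2.

Lemma Phd_in u w : 0 <= w -> Rabs u <= w -> Phd u w = u * u + w * w.
Proof.
  intros Hw Hu. unfold Phd. revert Hu. unfold Rabs.
  repeat destruct Rcase_abs; intros; nra.
Qed.

Lemma Phd_out u w : 0 <= w -> w <= Rabs u -> Phd u w = 2 * Rabs u * w.
Proof.
  intros Hw Hu. unfold Phd. revert Hu. unfold Rabs.
  repeat destruct Rcase_abs; intros; nra.
Qed.

Lemma Phd_neg u w : Phd (- u) w = Phd u w.
Proof.
  unfold Phd. replace (- u + w) with (- (u - w)) by ring. replace (- u - w) with (- (u + w)) by ring.
  rewrite !Rabs_Ropp. field.
Qed.

Lemma sq_le_abs x y : 0 <= y -> x * x <= y * y -> Rabs x <= y.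
Proof. intros. unfold Rabs; destruct Rcase_abs; nra. Qed.
Lemma sq_ge_abs x y : 0 <= y -> y * y <= x * x -> y <= Rabs x.
Proof. intros. unfold Rabs; destruct Rcase_abs; nra. Qed.

Section Gsec.
Variable N g : R.
Hypothesis HN : 0 < N.
Hypothesis Hg : g * g <= 1.

Definition Gf t := Phd (g * t) (wf N t).
Definition rr := sqrt (1 + g * g).
Definition t0 := N / rr.
Definition aa := Rabs g.

Lemma rr_pos : 0 < rr.
Proof. unfold rr. apply sqrt_lt_R0. nra. Qed.
Lemma rr_sq : rr * rr = 1 + g * g.
Proof. unfold rr. apply sqrt_sqrt. nra. Qed.
Lemma aa_sq : aa * aa = g * g.
Proof. unfold aa. rewrite <- Rabs_mult. apply Rabs_pos_eq. nra. Qed.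
Lemma aa_nn : 0 <= aa.
Proof. apply Rabs_pos. Qed.

Lemma t0_pos : 0 < t0.
Proof. unfold t0. apply Rdiv_lt_0_compat; auto. apply rr_pos. Qed.
Lemma t0_sq : t0 * t0 * (1 + g * g) = N * N.
Proof.
  unfold t0. rewrite <- rr_sq. pose proof rr_pos. field. lra.
Qed.
Lemma t0_le : t0 <= N.
Proof. pose proof t0_sq. pose proof t0_pos. nra. Qed.
Lemma t0_half : N * N <= 2 * (t0 * t0).
Proof. pose proof t0_sq. pose proof t0_pos. nra. Qed.

Lemma G_in t : 0 <= t <= t0 -> Gf t = g * g * (t * t) + (N * N - t * t).
Proof.
  intros Ht. pose proof t0_sq. pose proof t0_le.
  unfold Gf. rewrite Phd_in.
  - rewrite w_sq by lra. ring.
  - apply w_nonneg.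
  - apply sq_le_abs. apply w_nonneg. rewrite w_sq by lra.
    assert (t * t <= t0 * t0) by nra. assert (0 <= g * g) by nra. nra.
Qed.

Lemma G_out t : t0 <= t <= N -> Gf t = 2 * aa * t * wf N t.
Proof.
  intros Ht. pose proof t0_sq. pose proof t0_pos. pose proof aa_nn.
  unfold Gf. rewrite Phd_out.
  - unfold aa. rewrite Rabs_mult, (Rabs_pos_eq t) by lra. ring.
  - apply w_nonneg.
  - apply sq_ge_abs. apply w_nonneg. rewrite w_sq by lra.
    assert (t0 * t0 <= t * t) by nra. assert (0 <= g * g) by nra. nra.
Qed.

Lemma G_even t : Gf (- t) = Gf t.
Proof. unfold Gf. rewrite w_even. replace (g * - t) with (- (g * t)) by ring. apply Phd_neg. Qed.

Lemma G_0 : Gf 0 = N * N.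
Proof. pose proof t0_pos. rewrite G_in by lra. ring. Qed.

Lemma G_N : Gf N = 0.
Proof. pose proof t0_le. rewrite G_out by lra. rewrite w_N. ring. Qed.

Lemma tw_dec x y : t0 <= x -> x <= y -> y <= N -> y * wf N y <= x * wf N x.
Proof.
  intros H1 H2 H3. pose proof t0_half. pose proof t0_pos.
  assert (Ex := w_sq N x ltac:(lra)). assert (Ey := w_sq N y ltac:(lra)).
  pose proof (w_nonneg N x). pose proof (w_nonneg N y).
  assert (Hs : (y * wf N y) * (y * wf N y) <= (x * wf N x) * (x * wf N x)).
  { replace ((y * wf N y) * (y * wf N y)) with (y * y * (wf N y * wf N y)) by ring.
    replace ((x * wf N x) * (x * wf N x)) with (x * x * (wf N x * wf N x)) by ring.
    rewrite Ex, Ey.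
    assert (0 <= y*y - x*x) by nra. assert (0 <= y*y + x*x - N*N) by nra.
    assert (0 <= (y*y - x*x) * (y*y + x*x - N*N)) by (apply Rmult_le_pos; auto). nra. }
  assert (0 <= y * wf N y) by (apply Rmult_le_pos; lra).
  assert (0 <= x * wf N x) by (apply Rmult_le_pos; lra).
  nra.
Qed.

Lemma G_dec x y : 0 <= x -> x <= y -> y <= N -> Gf y <= Gf x.
Proof.
  intros H1 H2 H3. pose proof t0_le. pose proof t0_pos. pose proof aa_nn.
  assert (Gin : forall x y, 0 <= x -> x <= y -> y <= t0 -> Gf y <= Gf x).
  { intros a b Ha Hab Hb. rewrite !G_in by lra.
    assert (0 <= (1 - g * g) * (b * b - a * a)) by (apply Rmult_le_pos; nra). nra. }
  assert (Gout : forall x y, t0 <= x -> x <= y -> y <= N -> Gf y <= Gf x).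
  { intros a b Ha Hab Hb. rewrite !G_out by lra.
    pose proof (tw_dec a b Ha Hab Hb). nra. }
  destruct (Rle_dec y t0); [apply Gin; lra|].
  destruct (Rle_dec t0 x); [apply Gout; lra|].
  apply Rle_trans with (Gf t0); [apply Gout|apply Gin]; lra.
Qed.

Definition Pf t := N * N * t - (1 - g * g) * (t * t * t) / 3.
Definition Qf t := 2 * aa / 3 * (N * N - t * t) * wf N t.
Definition Q2 t := Pf t0 + Qf t0 - Qf t.
Definition Hf t := if Rle_dec t t0 then Pf t else Q2 t.

Lemma Q2_der x : -N < x < N -> is_derive Q2 x (2 * aa * x * wf N x).
Proof.
  intros Hx. unfold Q2, Qf, wf. auto_derive.
  - assert (0 < N * N - x * x) by nra. repeat split; try lra.
  - assert (Hp : 0 < N * N - x * x) by nra.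
    replace (N * N + - (x * x)) with (N * N - x * x) by ring.
    pose proof (sqrt_lt_R0 _ Hp) as Hs.
    pose proof (sqrt_sqrt _ (Rlt_le _ _ Hp)) as Hss.
    set (s := sqrt (N * N - x * x)) in *.
    rewrite <- Hss. field. lra.
Qed.
Lemma Q2_cont x : continuity_pt Q2 x.
Proof.
  apply continuity_pt_filterlim. unfold Q2, Qf.
  apply (continuous_plus (fun _ => Pf t0 + Qf t0) (fun t => - (2 * aa / 3 * (N * N - t * t) * wf N t))).
  apply continuous_const.
  apply (continuous_opp (fun t => 2 * aa / 3 * (N * N - t * t) * wf N t)).
  apply (continuous_mult (fun t => 2 * aa / 3 * (N * N - t * t)) (wf N)).
  - apply (@ex_derive_continuous R_AbsRing R_NormedModule). auto_derive. auto.
  - apply cont_w.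
Qed.

Lemma Hf_eq1 t : t <= t0 -> Hf t = Pf t.
Proof. intros. unfold Hf. destruct Rle_dec; auto; lra. Qed.
Lemma Hf_eq2 t : t0 <= t -> Hf t = Q2 t.
Proof.
  intros. unfold Hf. destruct Rle_dec; auto.
  assert (t = t0) by lra. subst. unfold Q2. ring.
Qed.

Lemma good_Hf p q : 0 <= p -> p <= q -> q <= N -> Good Hf Gf p q.
Proof.
  intros H0 Hpq HqN. pose proof t0_le. pose proof t0_pos. pose proof aa_nn.
  assert (G1 : forall p q, 0 <= p -> p <= q -> q <= t0 -> Good Hf Gf p q).
  { intros a b Ha Hab Hb. apply (good_ext Pf).
    - rewrite Hf_eq1; auto; lra.
    - rewrite Hf_eq1; auto.
    - unfold Good. rewrite !G_in by lra. unfold Pf.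
      assert (0 <= 1 - g * g) by lra.
      assert (0 <= (1 - g * g) * ((b - a) * (b - a))) by (apply Rmult_le_pos; nra).
      split; nra. }
  assert (G2 : forall p q, t0 <= p -> p <= q -> q <= N -> Good Hf Gf p q).
  { intros a b Ha Hab Hb. apply (good_ext Q2).
    - rewrite Hf_eq2; auto.
    - rewrite Hf_eq2; auto; lra.
    - apply good_mvt; auto.
      + intros x Hx. rewrite G_out by lra. apply Q2_der. lra.
      + intros x Hx. apply Q2_cont.
      + intros x y Hx Hxy Hy. apply G_dec; lra. }
  destruct (Rle_dec q t0); [apply G1; auto|].
  destruct (Rle_dec t0 p); [apply G2; auto|].
  apply (good_glue _ _ p t0 q); try lra.
  - apply G1; lra.
  - apply G2; lra.
  - apply G_dec; lra.
  - apply G_dec; lra.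
Qed.

Lemma w_t0 : wf N t0 = aa * N / rr.
Proof.
  pose proof rr_pos. pose proof aa_nn. pose proof t0_sq. pose proof t0_le. pose proof t0_pos.
  assert (E := w_sq N t0 ltac:(lra)).
  pose proof (w_nonneg N t0).
  assert (0 <= aa * N / rr) by (apply Rmult_le_pos; [nra|left; apply Rinv_0_lt_compat; auto]).
  assert (E2 : (aa * N / rr) * (aa * N / rr) = N * N - t0 * t0).
  { unfold t0. replace (aa * N / rr * (aa * N / rr)) with (aa * aa * (N * N) / (rr * rr)) by (field; lra).
    replace (N * N - N / rr * (N / rr)) with ((rr * rr - 1) * (N * N) / (rr * rr)) by (field; lra).
    rewrite aa_sq, rr_sq. f_equal. ring. }
  nra.
Qed.

Lemma Hf_0 : Hf 0 = 0.
Proof. pose proof t0_pos. rewrite Hf_eq1 by lra. unfold Pf. field. Qed.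

Lemma Hf_N : Hf N = 2 / 3 * rr * (N * N * N).
Proof.
  pose proof t0_le. rewrite Hf_eq2 by lra. unfold Q2, Qf. rewrite w_N, w_t0.
  pose proof rr_pos. pose proof rr_sq. pose proof aa_sq.
  unfold Pf, t0.
  apply Rmult_eq_reg_r with (3 * (rr * rr * rr)); [|nra].
  field_simplify; [|lra].
  replace (aa ^ 2) with (g * g) by (rewrite <- H2; ring).
  replace (rr ^ 4) with ((1 + g * g) * (1 + g * g)) by (rewrite <- H1; ring).
  replace (rr ^ 2) with (1 + g * g) by (rewrite <- H1; ring).
  ring.
Qed.
End Gsec.

Lemma mid_err p :
  Rabs (Rabs p - ((p + / 2) * Rabs (p + / 2) - (p - / 2) * Rabs (p - / 2)) / 2) <= / 4.
Proof.
  unfold Rabs at 2 3 4. repeat destruct Rcase_abs; unfold Rabs; destruct Rcase_abs; nra.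
Qed.

Lemma sq_lip U V : Rabs (U * Rabs U - V * Rabs V) <= Rabs (U - V) * (Rabs U + Rabs V).
Proof.
  unfold Rabs. repeat destruct Rcase_abs; nra.
Qed.

Definition Phi (u s : R) := (u + s) * Rabs (u + s) / 2.

Lemma Phi_lip u x y d B :
  Rabs (x - y) <= d -> Rabs (u + x) + Rabs (u + y) <= B -> 0 <= d ->
  Rabs (Phi u x - Phi u y) <= d * B / 2.
Proof.
  intros H1 H2 Hd. unfold Phi.
  replace ((u + x) * Rabs (u + x) / 2 - (u + y) * Rabs (u + y) / 2)
    with (((u + x) * Rabs (u + x) - (u + y) * Rabs (u + y)) / 2) by field.
  unfold Rdiv. rewrite Rabs_mult, (Rabs_pos_eq (/ 2)) by lra.
  apply Rmult_le_compat_r; [lra|].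
  eapply Rle_trans; [apply sq_lip|].
  replace (u + x - (u + y)) with (x - y) by ring.
  apply Rmult_le_compat; auto; try apply Rabs_pos.
  apply Rplus_le_le_0_compat; apply Rabs_pos.
Qed.

Lemma inner (g N : R) (k h : Z) (w : R) :
  g * g <= 1 -> Rabs (IZR k) <= N -> (0 <= h)%Z -> IZR h <= w < IZR h + 1 -> w <= N ->
  Rabs (zsum (fun s => Rabs (g * IZR k + IZR s)) (- h)%Z (2 * Z.to_nat h + 1)
        - Phd (g * IZR k) w) <= 3 * N + 3.
Proof.
  intros Hg Hk Hh Hw HwN.
  set (u := g * IZR k).
  assert (Hu : Rabs u <= N).
  { unfold u. rewrite Rabs_mult. assert (Rabs g <= 1) by (apply sq_le_abs; lra).
    pose proof (Rabs_pos g). pose proof (Rabs_pos (IZR k)). nra. }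
  set (len := (2 * Z.to_nat h + 1)%nat).
  set (Fz := fun i : Z => Phi u (IZR i - / 2)).
  assert (Htel := zsum_telescope Fz (- h)%Z len).
  assert (Hend : (- h + Z.of_nat len)%Z = (h + 1)%Z) by (unfold len; lia).
  rewrite Hend in Htel. unfold Fz in Htel.
  rewrite plus_IZR, opp_IZR in Htel.
  assert (Hlen : INR len = 2 * IZR h + 1).
  { unfold len. rewrite INR_IZR_INZ. rewrite Nat2Z.inj_add, Nat2Z.inj_mul, Z2Nat.id by lia.
    rewrite plus_IZR, mult_IZR. simpl. ring. }
  assert (Hh0 : 0 <= IZR h) by (apply IZR_le; lia).
  assert (E1 : Rabs (zsum (fun s => Rabs (u + IZR s)) (- h)%Z len
                     - zsum (fun i => Fz (i + 1)%Z - Fz i) (- h)%Z len) <= INR len * / 4).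
  { apply zsum_abs_le. intros i _. unfold Fz, Phi. rewrite plus_IZR.
    replace (u + (IZR i + 1 - / 2)) with ((u + IZR i) + / 2) by field.
    replace (u + (IZR i - / 2)) with ((u + IZR i) - / 2) by ring.
    set (p := u + IZR i).
    replace ((p + / 2) * Rabs (p + / 2) / 2 - (p - / 2) * Rabs (p - / 2) / 2)
      with (((p + / 2) * Rabs (p + / 2) - (p - / 2) * Rabs (p - / 2)) / 2) by field.
    apply mid_err. }
  unfold Fz in E1. rewrite Htel in E1.
  assert (E2 : Rabs (Phi u (IZR h + 1 - / 2) - Phi u w) <= / 2 * (4 * N + 1) / 2).
  { apply Phi_lip; try lra.
    - rewrite Rabs_le_between. split; lra.
    - pose proof (Rabs_triang u (IZR h + 1 - / 2)). pose proof (Rabs_triang u w).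
      rewrite (Rabs_pos_eq (IZR h + 1 - / 2)) in H by lra.
      rewrite (Rabs_pos_eq w) in H0 by lra. lra. }
  assert (E3 : Rabs (Phi u (- IZR h - / 2) - Phi u (- w)) <= / 2 * (4 * N + 1) / 2).
  { apply Phi_lip; try lra.
    - rewrite Rabs_le_between. split; lra.
    - pose proof (Rabs_triang u (- IZR h - / 2)). pose proof (Rabs_triang u (- w)).
      rewrite (Rabs_left1 (- IZR h - / 2)) in H by lra.
      rewrite (Rabs_left1 (- w)) in H0 by lra. lra. }
  assert (HP : Phd u w = Phi u w - Phi u (- w)).
  { unfold Phd, Phi. replace (u + - w) with (u - w) by ring. field. }
  rewrite HP.
  assert (Hlen' : INR len * / 4 <= (2 * N + 1) / 4) by (rewrite Hlen; lra).
  set (T := zsum (fun s => Rabs (u + IZR s)) (- h)%Z len) in *.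
  set (A := T - (Phi u (IZR h + 1 - / 2) - Phi u (- IZR h - / 2))) in *.
  set (B := Phi u (IZR h + 1 - / 2) - Phi u w) in *.
  set (C := Phi u (- IZR h - / 2) - Phi u (- w)) in *.
  replace (T - (Phi u w - Phi u (- w))) with (A + B + - C) by (unfold A, B, C; ring).
  pose proof (Rabs_triang (A + B) (- C)). pose proof (Rabs_triang A B).
  rewrite Rabs_Ropp in H. lra.
Qed.

Lemma zsum_sym_even f n : (forall k, f (- k)%Z = f k) ->
  zsum f (- Z.of_nat n)%Z (2 * n + 1) = 2 * zsum f 0%Z (n + 1) - f 0%Z.
Proof.
  intros He. rewrite zsum_sym. rewrite (zsum_ext (fun k => f (- k)%Z) f) by auto.
  rewrite Nat.add_1_r, zsum_shift1. ring.
Qed.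

Lemma col_facts n k : (1 <= n)%nat -> (- Z.of_nat n <= k <= Z.of_nat n)%Z ->
  let h := Z.sqrt (Z.of_nat n * Z.of_nat n - k * k) in
  (0 <= h)%Z /\ IZR h <= wf (INR n) (IZR k) < IZR h + 1 /\ Rabs (IZR k) <= INR n
  /\ wf (INR n) (IZR k) <= INR n.
Proof.
  intros Hn Hk. cbv zeta.
  set (m := (Z.of_nat n * Z.of_nat n - k * k)%Z).
  assert (Hm : (0 <= m)%Z) by (unfold m; nia).
  pose proof (Z.sqrt_spec m Hm) as Hs. simpl in Hs. set (h := Z.sqrt m) in *.
  assert (Hh0 : (0 <= h)%Z) by (apply Z.sqrt_nonneg).
  assert (Hw : wf (INR n) (IZR k) = sqrt (IZR m)).
  { unfold wf, m. rewrite minus_IZR, !mult_IZR, <- INR_IZR_INZ. reflexivity. }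
  assert (HN : 0 <= INR n) by apply pos_INR.
  assert (Hkr : Rabs (IZR k) <= INR n).
  { rewrite INR_IZR_INZ. apply Rabs_le. split; [rewrite <- opp_IZR|]; apply IZR_le; lia. }
  assert (Hmr : 0 <= IZR m) by (apply IZR_le; lia).
  assert (Hsq := sqrt_sqrt _ Hmr). pose proof (sqrt_pos (IZR m)).
  assert (E1 : IZR h * IZR h <= IZR m) by (rewrite <- mult_IZR; apply IZR_le; lia).
  assert (E2 : IZR m < (IZR h + 1) * (IZR h + 1)).
  { replace (IZR h + 1) with (IZR (Z.succ h)) by (rewrite succ_IZR; ring).
    rewrite <- mult_IZR. apply IZR_lt. lia. }
  assert (Hh0r : 0 <= IZR h) by (apply IZR_le; lia).
  repeat split; auto.
  - rewrite Hw. destruct (Rle_lt_dec (IZR h) (sqrt (IZR m))); auto. nra.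
  - rewrite Hw. destruct (Rlt_le_dec (sqrt (IZR m)) (IZR h + 1)); auto. nra.
  - unfold wf. apply Rle_trans with (sqrt (INR n * INR n)).
    + apply sqrt_le_1_alt. pose proof (Rle_0_sqr (IZR k)). unfold Rsqr in *. lra.
    + rewrite sqrt_square; lra.
Qed.

Lemma Dgamma n g : (1 <= n)%nat -> g * g <= 1 ->
  Rabs (Dsum n (fun a b => Rabs (g * IZR a + IZR b)) - 4 / 3 * rr g * (INR n * INR n * INR n))
  <= INR n * INR n + (2 * INR n + 1) * (3 * INR n + 3).
Proof.
  intros Hn Hg.
  set (N := INR n).
  assert (HN : 0 < N) by (apply lt_0_INR; lia).
  assert (E1 : Dsum n (fun a b => Rabs (g * IZR a + IZR b)) =
    zsum (fun k => zsum (fun s => Rabs (g * IZR k + IZR s))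
      (- Z.sqrt (Z.of_nat n * Z.of_nat n - k * k))%Z
      (2 * Z.to_nat (Z.sqrt (Z.of_nat n * Z.of_nat n - k * k)) + 1)) (- Z.of_nat n)%Z (2 * n + 1)).
  { unfold Dsum. apply zsum_ext. intros i Hi. apply column. lia. }
  assert (E2 : Rabs (Dsum n (fun a b => Rabs (g * IZR a + IZR b))
                - zsum (fun k => Gf N g (IZR k)) (- Z.of_nat n)%Z (2 * n + 1))
               <= INR (2 * n + 1) * (3 * N + 3)).
  { rewrite E1. apply zsum_abs_le. intros i Hi.
    destruct (col_facts n i Hn ltac:(lia)) as (H1 & H2 & H3 & H4).
    unfold Gf. apply inner; auto. }
  rewrite zsum_sym_even in E2 by (intros k; rewrite opp_IZR; apply G_even).
  assert (HS := good_sum2 (Hf N g) (Gf N g) n).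
  rewrite Hf_N, Hf_0, G_0 in HS by auto.
  destruct HS as [HS1 HS2].
  - intros k Hk. apply good_Hf; auto.
    + apply pos_INR.
    + lra.
    + unfold N. rewrite <- S_INR. apply le_INR. lia.
  - unfold N. rewrite G_N; auto. lra.
  - rewrite G_0 in E2 by auto.
    replace (INR (2 * n + 1)) with (2 * N + 1) in E2
      by (unfold N; rewrite plus_INR, mult_INR; simpl; ring).
    fold N. rewrite Rabs_le_between in E2 |- *.
    destruct E2. fold N in HS1, HS2. split; lra.
Qed.

Lemma Dcount n : (1 <= n)%nat ->
  Rabs (Dsum n (fun _ _ => 1) - PI * (INR n * INR n)) <= 5 * INR n /\ 1 <= Dsum n (fun _ _ => 1).
Proof.
  intros Hn.
  set (N := INR n).
  assert (HN : 1 <= N) by (unfold N; replace 1 with (INR 1) by reflexivity; apply le_INR; lia).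
  assert (E1 : Dsum n (fun _ _ => 1) =
    zsum (fun k => 2 * IZR (Z.sqrt (Z.of_nat n * Z.of_nat n - k * k)) + 1) (- Z.of_nat n)%Z (2 * n + 1)).
  { unfold Dsum. apply zsum_ext. intros i Hi. rewrite column by lia.
    rewrite zsum_const, Rmult_1_r, INR_IZR_INZ.
    rewrite Nat2Z.inj_add, Nat2Z.inj_mul, Z2Nat.id by (apply Z.sqrt_nonneg).
    rewrite plus_IZR, mult_IZR. simpl. ring. }
  assert (E2 : Rabs (Dsum n (fun _ _ => 1)
                - zsum (fun k => 2 * wf N (IZR k)) (- Z.of_nat n)%Z (2 * n + 1))
               <= INR (2 * n + 1) * 1).
  { rewrite E1. apply zsum_abs_le. intros i Hi.
    destruct (col_facts n i Hn ltac:(lia)) as (H1 & H2 & H3 & H4).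
    fold N in H2. apply Rabs_le. lra. }
  assert (E3 : 1 <= Dsum n (fun _ _ => 1)).
  { rewrite E1. apply Rle_trans with (zsum (fun _ => 1) (- Z.of_nat n)%Z (2 * n + 1)).
    - rewrite zsum_const. rewrite plus_INR, mult_INR. simpl. pose proof (pos_INR n). lra.
    - apply zsum_le. intros i _. pose proof (Z.sqrt_nonneg (Z.of_nat n * Z.of_nat n - i * i)).
      assert (0 <= IZR (Z.sqrt (Z.of_nat n * Z.of_nat n - i * i))) by (apply IZR_le; lia). lra. }
  split; auto.
  rewrite zsum_scal, zsum_sym_even in E2 by (intros k; rewrite opp_IZR; apply w_even).
  destruct (count_sum n Hn) as [C1 C2]. fold N in C1, C2.
  rewrite w_0 in E2 by lra.
  replace (INR (2 * n + 1)) with (2 * N + 1) in E2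
    by (unfold N; rewrite plus_INR, mult_INR; simpl; ring).
  rewrite Rabs_le_between in E2 |- *. destruct E2. split; nra.
Qed.

Lemma abs_half a b : Rabs (2 * IZR b - IZR a) = 2 * Rabs (- / 2 * IZR a + IZR b).
Proof.
  replace (2 * IZR b - IZR a) with (2 * (- / 2 * IZR a + IZR b)) by field.
  rewrite Rabs_mult, Rabs_pos_eq by lra. reflexivity.
Qed.

Lemma rr_half : rr (- / 2) = sqrt 5 / 2.
Proof.
  unfold rr. apply sqrt_lem_1.
  - lra.
  - pose proof (sqrt_pos 5). lra.
  - pose proof (sqrt_sqrt 5 ltac:(lra)). nra.
Qed.

Lemma rr_one : rr 1 = sqrt 2.
Proof. unfold rr. f_equal. ring. Qed.

Lemma sum_orbit n :
  sum_list (map orbit_length (disk_points n)) =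
  2 * (4 * Dsum n (fun a b => Rabs (- / 2 * IZR a + IZR b))
       + Dsum n (fun a b => Rabs (1 * IZR a + IZR b))).
Proof.
  rewrite disk_sum.
  rewrite (Dsum_ext n _ (fun a b => 2 * ((Rabs (2 * IZR a - IZR b) + Rabs (IZR a + IZR b))
                                       + Rabs (IZR a - 2 * IZR b)))) by (intros; apply orbit_formula).
  rewrite Dsum_scal, !Dsum_plus.
  rewrite (Dsum_swap n (fun a b => Rabs (2 * IZR a - IZR b))).
  rewrite (Dsum_ext n (fun a b => Rabs (2 * IZR b - IZR a))
                      (fun a b => 2 * Rabs (- / 2 * IZR a + IZR b))) by (intros; apply abs_half).
  rewrite (Dsum_ext n (fun a b => Rabs (IZR a - 2 * IZR b))
                      (fun a b => 2 * Rabs (- / 2 * IZR a + IZR b))).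
  2:{ intros. rewrite <- abs_half. rewrite <- Rabs_Ropp. f_equal. ring. }
  rewrite (Dsum_ext n (fun a b => Rabs (IZR a + IZR b)) (fun a b => Rabs (1 * IZR a + IZR b)))
    by (intros; rewrite Rmult_1_l; reflexivity).
  rewrite !Dsum_scal. ring.
Qed.

Theorem theorem1p2 :
  exists C : R, forall n : nat, (1 <= n)%nat ->
    Rabs (avg_orbit_length n - 8 / (3 * PI) * (sqrt 2 + 2 * sqrt 5) * INR n) <= C.
Proof.
  exists 20000. intros n Hn.
  unfold avg_orbit_length. rewrite sum_orbit, sum_length, disk_sum.
  set (X := Dsum n (fun a b => Rabs (- / 2 * IZR a + IZR b))).
  set (Y := Dsum n (fun a b => Rabs (1 * IZR a + IZR b))).
  set (Nc := Dsum n (fun _ _ => 1)).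
  set (N := INR n).
  assert (HN : 1 <= N) by (unfold N; replace 1 with (INR 1) by reflexivity; apply le_INR; lia).
  assert (HX := Dgamma n (- / 2) Hn ltac:(lra)). fold X N in HX. rewrite rr_half in HX.
  assert (HY := Dgamma n 1 Hn ltac:(lra)). fold Y N in HY. rewrite rr_one in HY.
  destruct (Dcount n Hn) as [HC HC1]. fold Nc N in HC, HC1.
  pose proof PI2_1 as Hpi1. pose proof PI_4 as Hpi2.
  assert (Hs2 : 0 <= sqrt 2 <= 3 / 2).
  { pose proof (sqrt_pos 2). pose proof (sqrt_sqrt 2 ltac:(lra)). split; nra. }
  assert (Hs5 : 0 <= sqrt 5 <= 9 / 4).
  { pose proof (sqrt_pos 5). pose proof (sqrt_sqrt 5 ltac:(lra)). split; nra. }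
  set (K0 := 8 / 3 * (sqrt 2 + 2 * sqrt 5)).
  assert (HK0 : 0 <= K0 <= 16) by (unfold K0; lra).
  set (E := N * N + (2 * N + 1) * (3 * N + 3)) in *.
  assert (HE : E <= 19 * (N * N)) by (unfold E; nra).
  set (a := 2 * (4 * X + Y) - K0 * (N * N * N)).
  assert (Ha : Rabs a <= 10 * E).
  { unfold a. replace (2 * (4 * X + Y) - K0 * (N * N * N)) with
      (8 * (X - 4 / 3 * (sqrt 5 / 2) * (N * N * N)) + 2 * (Y - 4 / 3 * sqrt 2 * (N * N * N)))
      by (unfold K0; field).
    eapply Rle_trans; [apply Rabs_triang|]. rewrite !Rabs_mult, (Rabs_pos_eq 8), (Rabs_pos_eq 2) by lra. generalize HX HY; generalize (Rabs (X - 4 / 3 * (sqrt 5 / 2) * (N * N * N))) (Rabs (Y - 4 / 3 * sqrt 2 * (N * N * N))). intros; lra. }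
  set (b := Nc - PI * (N * N)) in *.
  assert (Hpos : 0 < PI * Nc) by nra.
  replace (2 * (4 * X + Y) / Nc - 8 / (3 * PI) * (sqrt 2 + 2 * sqrt 5) * N)
    with ((PI * a - K0 * N * b) / (PI * Nc)) by (unfold a, b, K0; field; split; lra).
  unfold Rdiv. rewrite Rabs_mult, (Rabs_pos_eq (/ (PI * Nc))) by (left; apply Rinv_0_lt_compat; lra).
  assert (Hnum : Rabs (PI * a - K0 * N * b) <= 840 * (N * N)).
  { unfold Rminus. eapply Rle_trans; [apply Rabs_triang|]. rewrite Rabs_Ropp, !Rabs_mult.
    rewrite (Rabs_pos_eq PI), (Rabs_pos_eq K0), (Rabs_pos_eq N) by lra.
    assert (PI * Rabs a <= 4 * (10 * E)) by (apply Rmult_le_compat; try lra; apply Rabs_pos).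
    assert (K0 * N * Rabs b <= 16 * N * (5 * N)).
    { apply Rmult_le_compat; try lra. apply Rmult_le_pos; lra. apply Rabs_pos.
      apply Rmult_le_compat_r; lra. }
    lra. }
  assert (Hden : 840 * (N * N) <= 20000 * (PI * Nc)).
  { rewrite Rabs_le_between in HC. unfold b in HC. destruct HC.
    destruct (Rle_dec 6 N).
    - assert (Nc >= 2 * (N * N) - 5 * N) by nra. nra.
    - assert (N * N <= 36) by nra. nra. }
  apply Rmult_le_reg_r with (PI * Nc); auto.
  rewrite Rmult_assoc, Rinv_l by lra. lra.
Qed.
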